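(* Let $n\ge1$, let $\{e_1,\dots,e_n\}$ be a basis of a real vector space $X$, let $V=\{0,e_1,\dots,e_n\}$ and let $T=(V,E,0)$ be a tree on $V$ rooted at $0$. Suppose that $a,b\in\mathbb R^n$ and $c\in(\mathbb R\setminus\{0\})^n$ satisfy \[\sum_{i=1}^na_ie_i=\sum_{i=1}^nb_i\frac{e_i-\mathrm{pred}_T(e_i)}{c_i}.\] Then $b_i=c_i\sum_{\{j:\,e_j\in V_{e_i}^T\}}a_j$ for every $i=1,\dots,n$.
   Context: For a tree $T$ on a finite vertex set rooted at $0$ and a vertex $v\ne0$, $\mathrm{pred}_T(v)$ is the neighbour of $v$ on the unique path from $v$ to $0$ (here vertices are vectors, $0$ the zero vector), and $V_v^T$ is the vertex set of the subtree rooted at $v$, i.e. $v$ together with all vertices whose path to $0$ passes through $v$. *)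

(* Defs.v *)
From HB Require Import structures.
From mathcomp Require Import all_boot all_order all_algebra.
From mathcomp Require Import reals.
From Stdlib Require Import ClassicalEpsilon.
Set Implicit Arguments. Unset Strict Implicit. Unset Printing Implicit Defensive.
Import Order.TTheory GRing.Theory Num.Theory.
Local Open Scope ring_scope.

(* Vertices of V = {0, e_1, ..., e_n} are encoded by 'I_n.+1:
   ord0 is the zero vector (the root), lift ord0 i is e_(i+1) (= tnth e i). *)
Definition root {n : nat} : 'I_n.+1 := ord0.

Definition tree_path {n : nat} (E : rel 'I_n.+1) (x y : 'I_n.+1)
  (p : seq 'I_n.+1) : bool :=
  [&& path E x p, uniq (x :: p) & last x p == y].

Definition is_tree {n : nat} (E : rel 'I_n.+1) : Prop :=
  symmetric E /\ irreflexive E /\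
  forall x y : 'I_n.+1, exists! p, tree_path E x y p.

Definition is_pred {n : nat} (E : rel 'I_n.+1) (v u : 'I_n.+1) : Prop :=
  exists p, tree_path E v root (u :: p).

Definition tpred {n : nat} (E : rel 'I_n.+1) (v : 'I_n.+1) : 'I_n.+1 :=
  epsilon (inhabits root) (is_pred E v).

Definition in_subtree {n : nat} (E : rel 'I_n.+1) (v w : 'I_n.+1) : Prop :=
  exists p, tree_path E w root p /\ v \in w :: p.

Definition pbool (P : Prop) : bool :=
  if excluded_middle_informative P then true else false.

Definition vtx {R : fieldType} {X : vectType R} {n : nat} (e : n.-tuple X)
  (v : 'I_n.+1) : X :=
  match unlift ord0 v with None => 0 | Some j => tnth e j end.

(* Main.v *)
Require Import Defs.
From HB Require Import structures.
From mathcomp Require Import all_boot all_order all_algebra.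
From mathcomp Require Import reals.
From Stdlib Require Import ClassicalEpsilon.
Import Order.TTheory GRing.Theory Num.Theory.
Local Open Scope ring_scope.

Theorem lemma2p6 (R : realType) (X : vectType R) (n : nat) (hn : (0 < n)%N)
  (e : n.-tuple X) (he : basis_of fullv e)
  (E : rel 'I_n.+1) (hT : is_tree E)
  (a b c : 'I_n -> R) (hc : forall i, c i != 0)
  (hsum : \sum_(i < n) a i *: tnth e i =
          \sum_(i < n) (b i / c i) *: (tnth e i - vtx e (tpred E (lift ord0 i)))) :
  forall i : 'I_n,
    b i = c i * \sum_(j < n | pbool (in_subtree E (lift ord0 i) (lift ord0 j))) a j.
Proof.
have [_ [_ hU]] := hT.
have uniqp : forall w p q, tree_path E w Defs.root p ->
    tree_path E w Defs.root q -> p = q.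
  move=> w p q hp hq; have [r [_ hr]] := hU w Defs.root.
  by rewrite -(hr p hp) -(hr q hq).
have exP : forall w, exists p, tree_path E w Defs.root p.
  by move=> w; have [r [hr _]] := hU w Defs.root; exists r.
pose P w := xchoose (exP w).
have PP : forall w, tree_path E w Defs.root (P w) by move=> w; apply: xchooseP.
have sub_eq : forall k w, pbool (in_subtree E k w) = (k \in w :: P w).
  move=> k w; rewrite /pbool; case: excluded_middle_informative.
    move=> [p [hp hk]] /=; by rewrite (uniqp _ _ _ (PP w) hp).
  move=> hn'; apply/esym/negP => h; apply: hn'; exists (P w); split => //.
have P0 : P Defs.root = [::].
  by apply: uniqp => //; rewrite /tree_path /= eqxx.
have Pred : forall v, v != Defs.root ->
    P v = tpred E v :: P (tpred E v).
  move=> v hv.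
  have hex : exists u, is_pred E v u.
    have [p hp] := exP v; case: p hp => [|u q] hp.
      by move: hp; rewrite /tree_path /= => /eqP h; rewrite h eqxx in hv.
    by exists u, q.
  have [q hq] := epsilon_spec (inhabits Defs.root) (is_pred E v) hex.
  rewrite -/(tpred E v) in hq.
  rewrite (uniqp _ _ _ (PP v) hq); congr (_ :: _); apply/esym/(uniqp _ _ _ (PP _)).
  move: hq; rewrite /tree_path /= => /and3P[/andP[_ ->] /andP[_ ->] ->] //.
move=> k.
have freee := basis_free he.
set beta := fun i => b i / c i.
have coordv : forall j v, coord e j (vtx e v) = (v == lift ord0 j)%:R.
  move=> j v; case: (unliftP ord0 v) => [j0 ->|->].
    by rewrite /vtx liftK (tnth_nth 0) coord_free // (inj_eq lift_inj).
  by rewrite /vtx unlift_none linear0 (negbTE (neq_lift _ _)).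
have hcoef : forall j, a j = beta j -
    \sum_(i < n) beta i * (tpred E (lift ord0 i) == lift ord0 j)%:R.
  move=> j; have := congr1 (coord e j) hsum.
  rewrite !linear_sum /=.
  under eq_bigr do rewrite linearZ /= (tnth_nth 0) coord_free //.
  under [X in _ = X -> _]eq_bigr do
    rewrite linearZ /= linearB /= (tnth_nth 0) coord_free // coordv mulrBr.
  have d : forall F : 'I_n -> R, \sum_(i < n) F i * (i == j)%:R = F j.
    move=> F; rewrite (bigD1 j) //= eqxx mulr1 big1 ?addr0 //.
    by move=> i /negbTE ->; rewrite mulr0.
  by rewrite sumrB !d.
pose S w := lift ord0 k \in w :: P w.
have hS : forall v, \sum_(j < n | S (lift ord0 j)) (v == lift ord0 j)%:R = (S v)%:R :> R.
  move=> v; case: (unliftP ord0 v) => [j0 ->|->].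
    rewrite big_mkcond /= (bigD1 j0) //= eqxx big1 ?addr0.
      by case: (S _).
    by move=> j hj; rewrite (inj_eq lift_inj) eq_sym (negbTE hj) if_same.
  rewrite big1; last by move=> j _; rewrite (negbTE (neq_lift _ _)).
  by rewrite /S P0 inE.
have hSpred : forall i, S (tpred E (lift ord0 i)) = S (lift ord0 i) && (i != k).
  move=> i.
  have hr : lift ord0 i != Defs.root by rewrite eq_sym neq_lift.
  have := PP (lift ord0 i); rewrite /tree_path => /and3P[_ hu _].
  rewrite /S (Pred _ hr) in hu *.
  rewrite [in RHS]in_cons (inj_eq lift_inj).
  case: (eqVneq k i) => [->|hki] /=.
    by move: hu; rewrite cons_uniq => /andP[/negbTE -> _].
  by rewrite andbT.
have key : beta k = \sum_(j < n | S (lift ord0 j)) a j.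
  under eq_bigr do rewrite hcoef.
  rewrite sumrB exchange_big /=.
  under [X in _ - X]eq_bigr do rewrite -mulr_sumr hS hSpred.
  rewrite (bigD1 k) /=; last by rewrite /S mem_head.
  under [X in _ - X]eq_bigr => i _ do rewrite mulr_natr mulrb.
  by rewrite -big_mkcond addrK.
rewrite (eq_bigl (fun j => S (lift ord0 j))); last by move=> j; rewrite sub_eq.
by rewrite -key /beta mulrC divfK.
Qed.
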